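(* Let $L\in\mathbb{R}^{n\times n}$ be the Laplacian of an undirected unweighted graph on $n$ nodes, let $s \in \mathbb{R}^n$ be a mean-zero innate opinion vector and $z = (I+L)^{-1}s$. Let $(u_1,v_1)$ ($u_1\ne v_1$) be a pair of nodes not joined by an edge and $(u_2,v_2)$ an edge of the graph, with edge Laplacians $E_k = \chi_{u_k,v_k}\chi_{u_k,v_k}^T$ and $\delta_k = z(u_k)-z(v_k)$ for $k=1,2$. If $|\delta_2| > \frac{3\sqrt3}{4}\,|\delta_1|$, then $$PD(L+E_1-E_2) > PD(L).$$
   Context: $\chi_{u,v}\in\mathbb{R}^n$ is the vector with $1$ in coordinate $u$, $-1$ in coordinate $v$ and $0$ elsewhere. Friedkin–Johnsen model: expressed opinions $z=(I+L)^{-1}s$. With $s$ fixed, the polarization+disagreement of a graph with Laplacian $M$ is $PD(M) = s^T (I+M)^{-1} s$. *)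

(* Defs.v *)
From mathcomp Require Import all_boot all_order all_algebra.
Set Implicit Arguments. Unset Strict Implicit. Unset Printing Implicit Defensive.
Import Order.TTheory GRing.Theory Num.Theory.
Local Open Scope ring_scope.

Definition simple_graph (n : nat) (adj : rel 'I_n) : Prop :=
  symmetric adj /\ irreflexive adj.

Definition laplacian (R : rcfType) (n : nat) (adj : rel 'I_n) : 'M[R]_n :=
  \matrix_(i, j) (if i == j then (#|[set k | adj i k]|)%:R
                  else if adj i j then -1 else 0).

Definition chi (R : rcfType) (n : nat) (u v : 'I_n) : 'cV[R]_n :=
  \col_i ((i == u)%:R - (i == v)%:R).

Definition edgeLap (R : rcfType) (n : nat) (u v : 'I_n) : 'M[R]_n :=
  chi R u v *m (chi R u v)^T.

Definition fj_opinions (R : rcfType) (n : nat) (M : 'M[R]_n) (s : 'cV[R]_n)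
  : 'cV[R]_n := invmx (1%:M + M) *m s.

Definition PD (R : rcfType) (n : nat) (s : 'cV[R]_n) (M : 'M[R]_n) : R :=
  ((s^T *m invmx (1%:M + M) *m s) 0 0).

(* Main.v *)
Require Import Defs.
From mathcomp Require Import all_boot all_order all_algebra.
From mathcomp Require Import ring lra.
Import Order.TTheory GRing.Theory Num.Theory.
Local Open Scope ring_scope.

Set Implicit Arguments.
Unset Strict Implicit.
Section S.
Variable R : rcfType.

Lemma sum_pick n (x : 'I_n -> R) (u : 'I_n) :
  \sum_i x i * (i == u)%:R = x u.
Proof.
rewrite (bigD1 u) //= eqxx mulr1 big1 ?addr0 // => i /negbTE ->; by rewrite mulr0.
Qed.

Lemma chiT_dot n (u v : 'I_n) (x : 'cV[R]_n) :
  ((chi R u v)^T *m x) 0 0 = x u 0 - x v 0.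
Proof.
rewrite mxE.
under eq_bigr => i _ do rewrite !mxE mulrBl mulrC [(i==v)%:R * _]mulrC.
by rewrite sumrB !sum_pick.
Qed.

Lemma mx11E (a b : 'M[R]_1) : (a *m b) 0 0 = a 0 0 * b 0 0.
Proof. by rewrite mxE big_ord1. Qed.

Lemma edge_quad n (u v : 'I_n) (x : 'cV[R]_n) :
  (x^T *m edgeLap R u v *m x) 0 0 = (x u 0 - x v 0) ^+ 2.
Proof.
rewrite /edgeLap mulmxA -mulmxA mx11E -{1}(trmxK (chi R u v)) -trmx_mul.
by rewrite mxE chiT_dot expr2.
Qed.

Lemma edge_sym n (u v : 'I_n) : (edgeLap R u v)^T = edgeLap R u v.
Proof. by rewrite /edgeLap trmx_mul trmxK. Qed.

Lemma lap_sym n (adj : rel 'I_n) : symmetric adj -> (laplacian R adj)^T = laplacian R adj.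
Proof.
move=> Hs; apply/matrixP => i j; rewrite !mxE eq_sym Hs.
by case: eqP => // ->.
Qed.

Lemma card_sum n (adj : rel 'I_n) i :
  (#|[set k | adj i k]|)%:R = \sum_j (adj i j)%:R :> R.
Proof.
rewrite cardsE -sum1_card natr_sum big_mkcond /=.
by apply: eq_bigr => j _; rewrite unfold_in; case: (adj i j).
Qed.

Lemma lap_row n (adj : rel 'I_n) (x : 'cV[R]_n) i : irreflexive adj ->
  (laplacian R adj *m x) i 0 = \sum_j (adj i j)%:R * (x i 0 - x j 0).
Proof.
move=> Hirr; rewrite mxE (bigD1 i) //= [RHS](bigD1 i) //= Hirr mul0r add0r.
rewrite !mxE eqxx card_sum (bigD1 i) //= Hirr add0r mulr_suml.
rewrite -big_split /=; apply: eq_bigr => j /negbTE Hj.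
rewrite /laplacian mxE eq_sym Hj; case: (adj i j); rewrite /=; lra.
Qed.

Lemma sqsum_nonneg n (x : 'I_n -> R) : 0 <= \sum_i x i ^+ 2.
Proof. by apply: sumr_ge0 => i _; apply: sqr_ge0. Qed.

Lemma lap_quad n (adj : rel 'I_n) (x : 'cV[R]_n) u v : simple_graph adj -> adj u v ->
  (x u 0 - x v 0) ^+ 2 <= (x^T *m laplacian R adj *m x) 0 0.
Proof.
move=> [Hs Hirr] Huv.
have Q : (x^T *m laplacian R adj *m x) 0 0 =
   \sum_i \sum_j (adj i j)%:R * (x i 0 ^+ 2 - x i 0 * x j 0).
  rewrite -mulmxA mxE; apply: eq_bigr => i _; rewrite lap_row // !mxE mulr_sumr.
  by apply: eq_bigr => j _; rewrite expr2; ring.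
have Q2 : (x^T *m laplacian R adj *m x) 0 0 =
   \sum_i \sum_j (adj i j)%:R * (x j 0 ^+ 2 - x j 0 * x i 0).
  rewrite Q exchange_big /=; apply: eq_bigr => i _; apply: eq_bigr => j _.
  by rewrite Hs.
have Q3 : 2%:R * (x^T *m laplacian R adj *m x) 0 0 =
   \sum_i \sum_j (adj i j)%:R * (x i 0 - x j 0) ^+ 2.
  rewrite mulr2n mulrDl mul1r {1}Q Q2 -big_split /=; apply: eq_bigr => i _.
  rewrite -big_split /=; apply: eq_bigr => j _; rewrite -mulrDr; congr (_ * _).
  rewrite !expr2; lra.
have Hne : u != v by apply/eqP => E; move: Huv; rewrite E Hirr.
have F : forall i j, 0 <= (adj i j)%:R * (x i 0 - x j 0) ^+ 2 :> R.
  by move=> i j; apply: mulr_ge0; [apply: ler0n | apply: sqr_ge0].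
have G : forall i j, adj i j -> (x i 0 - x j 0) ^+ 2 <=
     \sum_k (adj i k)%:R * (x i 0 - x k 0) ^+ 2.
  move=> i j Hij; rewrite (bigD1 j) //= Hij mul1r lerDl.
  by apply: sumr_ge0 => k _.
have S2 : forall f : 'I_n -> R, (forall i, 0 <= f i) -> f u + f v <= \sum_i f i.
  move=> f f0; rewrite (bigD1 u) //= (bigD1 v) /=; last by rewrite eq_sym.
  by rewrite addrA lerDl; apply: sumr_ge0.
have : 2%:R * (x u 0 - x v 0) ^+ 2 <= 2%:R * (x^T *m laplacian R adj *m x) 0 0.
  rewrite Q3; apply: le_trans (S2 _ _); last by move=> i; apply: sumr_ge0.
  rewrite mulr2n mulrDl mul1r; apply: lerD; first by apply: G.
  by rewrite -sqrrN opprB; apply: G; rewrite Hs.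
move=> H; lra.
Qed.


Lemma mxDE m n (A B : 'M[R]_(m, n)) i j : (A + B) i j = A i j + B i j.
Proof. by rewrite mxE. Qed.
Lemma mxBE m n (A B : 'M[R]_(m, n)) i j : (A - B) i j = A i j - B i j.
Proof. by rewrite !mxE. Qed.

Definition quad {n} (M : 'M[R]_n) (x : 'cV[R]_n) := (x^T *m M *m x) 0 0.

Lemma quadD n (M N : 'M[R]_n) x : quad (M + N) x = quad M x + quad N x.
Proof. by rewrite /quad mulmxDr mulmxDl mxDE. Qed.
Lemma quadB n (M N : 'M[R]_n) x : quad (M - N) x = quad M x - quad N x.
Proof. by rewrite /quad mulmxBr mulmxBl mxBE. Qed.
Lemma quad1 n (x : 'cV[R]_n) : quad 1%:M x = \sum_i x i 0 ^+ 2.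
Proof.
rewrite /quad mulmx1 mxE; apply: eq_bigr => i _; by rewrite mxE expr2.
Qed.

Lemma unit_of_pos n (M : 'M[R]_n) :
  (forall x : 'cV[R]_n, \sum_i x i 0 ^+ 2 <= quad M x) -> M \in unitmx.
Proof.
move=> H; rewrite unitmxE unitfE; apply/negP => /det0P [v vnz vM0].
have := H v^T; rewrite /quad trmxK vM0 mul0mx mxE => Hle.
have H0 : \sum_i v^T i 0 ^+ 2 = 0 by apply/le_anti; rewrite Hle sqsum_nonneg.
suff v0 : v = 0 by rewrite v0 eqxx in vnz.
apply/matrixP => i j.
have := @psumr_eq0P R _ xpredT (fun k => v^T k 0 ^+ 2) (fun k _ => sqr_ge0 _) H0 j isT.
rewrite ord1 mxE => /eqP; rewrite sqrf_eq0 => /eqP ->; by rewrite mxE.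
Qed.

Lemma sq_lt (a b c : R) : 1 <= c -> c * `|a| < `|b| -> a ^+ 2 < b ^+ 2.
Proof.
move=> Hc H.
have H1 : `|a| < `|b|.
  apply: le_lt_trans H; by rewrite -[X in X <= _]mul1r ler_wpM2r.
rewrite -(real_normK (num_real a)) -(real_normK (num_real b)) !expr2.
by apply: ltr_pM.
Qed.
End S.

Unset Implicit Arguments.
Theorem mainTheorem8 (R : rcfType) (n : nat) (adj : rel 'I_n)
  (s : 'cV[R]_n) (u1 v1 u2 v2 : 'I_n) :
  simple_graph adj ->
  \sum_(i < n) s i 0 = 0 ->
  u1 != v1 -> ~~ adj u1 v1 ->
  adj u2 v2 ->
  let L := laplacian R adj in
  let z := fj_opinions L s in
  let delta1 := z u1 0 - z v1 0 in
  let delta2 := z u2 0 - z v2 0 in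
  `|delta2| > 3%:R * Num.sqrt 3%:R / 4%:R * `|delta1| ->
  PD s (L + edgeLap R u1 v1 - edgeLap R u2 v2) > PD s L.
Proof.
move=> Hg _ _ _ Hadj L z d1 d2 Hd.
set E1 := edgeLap R u1 v1; set E2 := edgeLap R u2 v2.
set A0 := 1%:M + L.
set B := 1%:M + (L + E1 - E2).
have BE : B = A0 + E1 - E2 by rewrite /B /A0 !addrA.
have posA : forall x : 'cV[R]_n, \sum_i x i 0 ^+ 2 <= quad A0 x.
  move=> x; rewrite /A0 quadD quad1 lerDl.
  apply: le_trans (lap_quad x Hg Hadj); exact: sqr_ge0.
have posB : forall x : 'cV[R]_n, \sum_i x i 0 ^+ 2 <= quad B x.
  move=> x; rewrite BE quadB quadD /A0 quadD quad1 /quad !edge_quad -!addrA lerDl.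
  have := lap_quad x Hg Hadj; rewrite /L; set a := (_ ^+ 2); set b := (_ ^+ 2).
  have : 0 <= b by apply: sqr_ge0.
  move=> *; lra.
have uA := unit_of_pos posA.
have uB := unit_of_pos posB.
have symB : B^T = B.
  by rewrite /B !raddfD /= raddfN /= trmx1 lap_sym ?edge_sym //; case: Hg.
rewrite /PD -/A0 -/B.
set y := invmx B *m s.
have Hy : B *m y = s by rewrite /y mulKVmx.
have Hz : A0 *m z = s by rewrite /z /fj_opinions -/A0 mulKVmx.
have E0 : (s^T *m invmx A0 *m s) 0 0 = (s^T *m z) 0 0 by rewrite -mulmxA.
have E1' : (s^T *m invmx B *m s) 0 0 = (s^T *m y) 0 0 by rewrite -mulmxA.
rewrite E0 E1'.
have yB : y^T *m B = s^T by rewrite -{1}symB -trmx_mul Hy.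
have zs : (z^T *m s) 0 0 = (s^T *m z) 0 0.
  by rewrite -{1}(trmxK s) -trmx_mul mxE.
have Hq : quad B (y - z) = (s^T *m y) 0 0 - 2%:R * (s^T *m z) 0 0 + quad B z.
  have tB : (y - z)^T = y^T - z^T by rewrite [LHS]raddfB.
  rewrite /quad tB !mulmxBl !mulmxBr yB !mxBE.
  rewrite -[z^T *m B *m y]mulmxA Hy zs.
  move: ((s^T *m y) 0 0) ((s^T *m z) 0 0) ((z^T *m B *m z) 0 0) => a b c; ring.

have HqA : quad A0 z = (s^T *m z) 0 0 by rewrite /quad -mulmxA Hz zs.
have HqB : quad B z = (s^T *m z) 0 0 + d1 ^+ 2 - d2 ^+ 2.
  by rewrite BE quadB quadD HqA /quad !edge_quad.
have Hpos : 0 <= quad B (y - z) by apply: le_trans (posB _); exact: sqsum_nonneg.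
have Hc : 1 <= 3%:R * Num.sqrt 3%:R / 4%:R :> R.
  have h0 : 0 <= Num.sqrt (3%:R : R) by apply: sqrtr_ge0.
  have h2 : Num.sqrt (3%:R : R) ^+ 2 = 3%:R by rewrite sqr_sqrtr // ler0n.
  move: h0 h2; set t := Num.sqrt _ => h0 h2.
  rewrite expr2 in h2; nra.
have Hd2 : d1 ^+ 2 < d2 ^+ 2 by apply: sq_lt Hc Hd.
rewrite Hq HqB in Hpos.
move: Hpos Hd2; move: ((s^T *m y) 0 0) ((s^T *m z) 0 0) (d1 ^+ 2) (d2 ^+ 2) => a b c d.
clear; move=> *; lra.
Qed.
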